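(* Let $R$ be a ring with identity and involution $*$, and let $a\in R$. The following conditions are equivalent: (1) $a$ is dual core invertible; (2) $R = a^*R \oplus a^{\circ}$ and $R = aR \oplus a^{\circ}$; (3) $R = a^*R + a^{\circ}$ and $R = aR \oplus a^{\circ}$; (4) $R = Ra \oplus {}^{\circ}(a^* )$ and $R = aR \oplus a^{\circ}$; (5) $R = Ra + {}^{\circ}(a^* )$ and $R = aR \oplus a^{\circ}$; (6) $R = a^*R \oplus a^{\circ}$ and $R = Ra \oplus {}^{\circ}a$; (7) $R = a^*R + a^{\circ}$ and $R = Ra \oplus {}^{\circ}a$; (8) $R = Ra \oplus {}^{\circ}(a^* )$ and $R = Ra \oplus {}^{\circ}a$; (9) $R = Ra + {}^{\circ}(a^* )$ and $R = Ra \oplus {}^{\circ}a$. In this case, $$a_{\oplus} = x_1^* a y_1 = x_1^* a y_2^2 a = x_2 a y_1 = x_2 a y_2^2 a,$$ where $x_1,x_2,y_1,y_2\in R$ are any elements with $1 = a^* x_1 + u_1 = x_2 a + u_2 = a y_1 + v_1 = y_2 a + v_2$ for some $u_2 \in {}^{\circ}(a^* )$, $v_2 \in {}^{\circ}a$ and $u_1, v_1 \in a^{\circ}$.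
   Context: An involution on $R$ satisfies $(a^* )^*=a$, $(ab)^*=b^*a^*$, $(a+b)^*=a^*+b^*$. An element $x\in R$ is a dual core inverse of $a$ if $axa=a$, $xR=a^*R$ and $Rx=Ra$; it is unique, denoted $a_{\oplus}$, and $a$ is then dual core invertible. For $c\in R$: $cR=\{cx: x\in R\}$, $Rc=\{xc:x\in R\}$, $c^{\circ}=\{x\in R: cx=0\}$ (right annihilator), ${}^{\circ}c=\{x\in R: xc=0\}$ (left annihilator). ''$R = A \oplus B$'' means $R=A+B$ with $A\cap B=\{0\}$. *)

(* Defs.v *)
From mathcomp Require Import all_boot all_algebra.
Set Implicit Arguments. Unset Strict Implicit. Unset Printing Implicit Defensive.
Import GRing.Theory.
Local Open Scope ring_scope.

Definition involution (R : pzRingType) (star : R -> R) : Prop :=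
  [/\ forall a, star (star a) = a,
      forall a b, star (a * b) = star b * star a
    & forall a b, star (a + b) = star a + star b].

Definition rprinc (R : pzRingType) (c : R) : R -> Prop := fun y => exists r, y = c * r.
Definition lprinc (R : pzRingType) (c : R) : R -> Prop := fun y => exists r, y = r * c.
Definition rann (R : pzRingType) (c : R) : R -> Prop := fun y => c * y = 0.
Definition lann (R : pzRingType) (c : R) : R -> Prop := fun y => y * c = 0.

Definition set_eq (R : pzRingType) (A B : R -> Prop) : Prop := forall y, A y <-> B y.

Definition sum_whole (R : pzRingType) (A B : R -> Prop) : Prop :=
  forall z : R, exists u v, [/\ A u, B v & z = u + v].
Definition dsum_whole (R : pzRingType) (A B : R -> Prop) : Prop :=
  sum_whole A B /\ (forall z : R, A z -> B z -> z = 0).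

Definition dual_core_inverse (R : pzRingType) (star : R -> R) (a x : R) : Prop :=
  [/\ a * x * a = a, set_eq (rprinc x) (rprinc (star a)) & set_eq (lprinc x) (lprinc a)].

Definition dual_core_invertible (R : pzRingType) (star : R -> R) (a : R) : Prop :=
  exists x, dual_core_inverse star a x.

(* Main.v *)
Require Import Defs.
From mathcomp Require Import all_boot all_algebra.
Import GRing.Theory.
Local Open Scope ring_scope.

Lemma z_props (R : pzRingType) (s : R -> R) (a z : R) : involution s ->
  s a = z * a * s a -> s (z * a) = z * a /\ a * z * a = a.
Proof.
case=> ss sM _ e.
have ea : a = a * (s a * s z).
  by have := congr1 s e; rewrite ss !sM ss.
have h : s (z * a) = z * a.
  by rewrite sM {2}ea !mulrA -e.
split=> //.
by rewrite -mulrA -h sM -ea.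
Qed.

Lemma key (R : pzRingType) (s : R -> R) (a z y : R) : involution s ->
  s a = z * a * s a -> a = a * a * y -> a = a * y * a -> (exists r, a * y = r * a) ->
  dual_core_inverse s a (z * a * y).
Proof.
move=> hs e h1 h2 [r hr]. have [hza haz] := @z_props _ _ _ _ hs e. case: hs => ss sM _.
have xa : z*a*y*a = z*a.
  by rewrite -[z*a*y*a]mulrA -[z*a*(y*a)]mulrA [a*(y*a)]mulrA -h2.
have ax : a*(z*a*y) = a*y by rewrite !mulrA haz.
have h1' : a*(a*y) = a by rewrite mulrA -h1.
split.
- by rewrite !mulrA haz -h2.
- move=> v; split => -[t ->].
  + exists (s z * y * t). by rewrite -hza sM !mulrA.
  + exists (a * s a * t). by rewrite !mulrA xa -e.
- move=> v; split => -[t ->].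
  + exists (t*z*r). by rewrite -[z*a*y]mulrA hr !mulrA.
  + exists (t*a*a). by rewrite -[t*a*a*_]mulrA ax -mulrA h1'.
Qed.

Lemma ext_rs (R : pzRingType) (s : R -> R) (a : R) : involution s ->
  sum_whole (rprinc (s a)) (rann a) -> exists z, s a = z * a * s a.
Proof.
case=> ss sM _ H. case: (H 1) => u [v [[r ->] hv e]].
have ea : a = a * s a * r.
  by move: (congr1 (fun t => a * t) e); rewrite /= mulr1 mulrDr hv addr0 mulrA.
exists (s r). by have := congr1 s ea; rewrite !sM ss mulrA.
Qed.

Lemma ext_la (R : pzRingType) (s : R -> R) (a : R) :
  sum_whole (lprinc a) (lann (s a)) -> exists z, s a = z * a * s a.
Proof.
move=> H. case: (H 1) => u [v [[r ->] hv e]].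
exists r.
by move: (congr1 (fun t => t * s a) e); rewrite /= mul1r mulrDl hv addr0.
Qed.

Lemma ext_ra (R : pzRingType) (a : R) :
  dsum_whole (rprinc a) (rann a) ->
  exists y, [/\ a = a * a * y, a = a * y * a & exists r, a * y = r * a].
Proof.
case=> H D. case: (H 1) => u [v [[y ->] hv e]].
have h1 : a = a * a * y.
  by move: (congr1 (fun t => a * t) e); rewrite /= mulr1 mulrDr hv addr0 mulrA.
have h2 : a = a * y * a.
  apply/eqP; rewrite -subr_eq0; apply/eqP; apply: D.
  - by exists (1 - y * a); rewrite mulrBr mulr1 mulrA.
  - by rewrite /rann mulrBr !mulrA -h1 subrr.
exists y; split => //.
exists (a * y * y).
apply/eqP; rewrite -subr_eq0; apply/eqP; apply: D.
- by exists (y - y * y * a); rewrite mulrBr !mulrA.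
- by rewrite /rann mulrBr !mulrA -h1 -h2 subrr.
Qed.

Lemma ext_laa (R : pzRingType) (a : R) :
  dsum_whole (lprinc a) (lann a) ->
  exists y, [/\ a = a * a * y, a = a * y * a & exists r, a * y = r * a].
Proof.
case=> H D. case: (H 1) => u [v [[y ->] hv e]].
have h1 : a = y * a * a.
  by move: (congr1 (fun t => t * a) e); rewrite /= mul1r mulrDl hv addr0.
have h1' : y * (a * a) = a by rewrite mulrA -h1.
have h2 : a = a * y * a.
  apply/eqP; rewrite -subr_eq0; apply/eqP; apply: D.
  - by exists (1 - a * y); rewrite mulrBl mul1r.
  - by rewrite /lann mulrBl -[a*y*a*a]mulrA -[a*y*(a*a)]mulrA h1' subrr.
have h3 : y * a = a * y * y * a.
  apply/eqP; rewrite -subr_eq0; apply/eqP; apply: D.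
  - by exists (y - a * y * y); rewrite mulrBl.
  - by rewrite /lann mulrBl -h1 -!mulrA h1' mulrA -h2 subrr.
exists (y * y * a); split.
- have h3' : y*a = a*(y*(y*a)) by rewrite {1}h3 !mulrA.
  by rewrite -!mulrA -h3' mulrA -h2.
- by rewrite -!mulrA h1' mulrA -h2.
- by exists (a * y * y); rewrite !mulrA.
Qed.

Lemma dci_facts (R : pzRingType) (s : R -> R) (a x : R) : involution s ->
  dual_core_inverse s a x ->
  [/\ a * x * a = a, s (x * a) = x * a, x * a * x = x, x * x * a = x &
      [/\ a * a * x = a, x * a * s a = s a & exists u, a = u * a * a]].
Proof.
move=> hs [hx rx lx]. case: hs => ss sM sD.
have [r hr] : exists r, x = s a * r by apply/(rx x).1; exists 1; rewrite mulr1.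
have [t ht] : exists t, x = t * a by apply/(lx x).1; exists 1; rewrite mul1r.
have [w hw] : exists w, a = w * x by apply/(lx a).2; exists 1; rewrite mul1r.
have sa : s a = s a * (s x * s a) by have := congr1 s hx; rewrite !sM.
have sa' : s a * s x * s a = s a by rewrite -mulrA -sa.
have ex : s a * s x * x = x by rewrite [in X in _ * X = _]hr mulrA sa' -hr.
have hxa : x * a = s a * s x * x * a by rewrite ex.
have sxa : s (x * a) = x * a by rewrite {1}hxa !sM !ss !mulrA -hxa.
have xax : x * a * x = x by rewrite -sxa sM ex.
have hax' : a * (x * a) = a by rewrite mulrA hx.
have xax' : x * (a * x) = x by rewrite mulrA xax.
have xxa : x * x * a = x by rewrite {1}ht -!mulrA hax' -ht.
have aax : a * a * x = a by rewrite {1}hw -!mulrA xax' -hw.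
have esa : x * a * s a = s a by rewrite -sxa sM sa'.
split => //; split => //.
exists (w * x * t).
by rewrite -[w*x*t*a]mulrA -ht -!mulrA [x*(x*a)]mulrA xxa -hw.
Qed.

Lemma from_dci (R : pzRingType) (s : R -> R) (a x : R) : involution s ->
  dual_core_inverse s a x ->
  [/\ dsum_whole (rprinc (s a)) (rann a), dsum_whole (rprinc a) (rann a),
      dsum_whole (lprinc a) (lann (s a)) & dsum_whole (lprinc a) (lann a)].
Proof.
move=> hs hd.
have [hx sxa xax xxa [aax esa [u hu]]] := @dci_facts _ _ _ _ hs hd.
case: hs => ss sM sD.
have hax' : a * (x * a) = a by rewrite mulrA hx.
split; split.
- move=> z; exists (s a * (s x * z)), (z - x * a * z); split.
  + by exists (s x * z).
  + by rewrite /rann mulrBr !mulrA hx subrr.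
  + by rewrite mulrA -sM sxa addrC subrK.
- move=> z [r ->] hz. rewrite -esa -!mulrA.
  by rewrite /rann in hz; rewrite hz !mulr0.
- move=> z; exists (a * (x * z)), (z - a * x * z); split.
  + by exists (x * z).
  + by rewrite /rann mulrBr !mulrA aax subrr.
  + by rewrite mulrA addrC subrK.
- move=> z [r ->] hz. rewrite /rann in hz.
  by rewrite {1}hu -!mulrA hz !mulr0.
- move=> z; exists (z * x * a), (z - z * x * a); split.
  + by exists (z * x).
  + have esa' : x * (a * s a) = s a by rewrite mulrA esa.
    by rewrite /lann mulrBl -!mulrA esa' subrr.
  + by rewrite addrC subrK.
- move=> z [r ->] hz. rewrite /lann in hz.
  have e : r * a * s a * s x = r * a by rewrite -mulrA -sM sxa -mulrA hax'.
  by rewrite -e hz mul0r.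
- move=> z; exists (z * u * a), (z - z * u * a); split.
  + by exists (z * u).
  + have hu' : u * (a * a) = a by rewrite mulrA -hu.
    by rewrite /lann mulrBl -!mulrA hu' subrr.
  + by rewrite addrC subrK.
- move=> z [r ->] hz. rewrite /lann in hz.
  have e : r * a * a * x = r * a by rewrite -!mulrA [a * (a * x)]mulrA aax.
  by rewrite -e hz mul0r.
Qed.

Lemma za_eq (R : pzRingType) (s : R -> R) (a x z : R) : involution s ->
  dual_core_inverse s a x -> s a = z * a * s a -> z * a = x * a.
Proof.
move=> hs hd e.
have [hx sxa xax xxa [aax esa _]] := @dci_facts _ _ _ _ hs hd.
have [hza haz] := @z_props _ _ _ _ hs e.
case: hs => ss sM sD.
rewrite -{1}hza sM -esa -!mulrA -sM hza [a * (z * a)]mulrA haz.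
by [].
Qed.

Lemma formula_part (R : pzRingType) (s : R -> R) (a : R) : involution s ->
    (forall x, dual_core_inverse s a x ->
      forall x1 x2 y1 y2 u1 u2 v1 v2 : R,
        rann a u1 -> lann (s a) u2 -> rann a v1 -> lann a v2 ->
        1 = s a * x1 + u1 -> 1 = x2 * a + u2 ->
        1 = a * y1 + v1 -> 1 = y2 * a + v2 ->
        [/\ x = s x1 * a * y1, x = s x1 * a * y2 ^+ 2 * a,
            x = x2 * a * y1 & x = x2 * a * y2 ^+ 2 * a]).
Proof.
move=> hs x hd x1 x2 y1 y2 u1 u2 v1 v2 hu1 hu2 hv1 hv2 e1 e2 e3 e4.
have [hx sxa xax xxa [aax esa _]] := @dci_facts _ _ _ _ hs hd.
have hs' := hs. case: hs' => ss sM sD.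
have z1 : s a = s x1 * a * s a.
  have ea : a = a * s a * x1.
    by move: (congr1 (fun t => a * t) e1); rewrite /= mulr1 mulrDr hu1 addr0 mulrA.
  by have := congr1 s ea; rewrite !sM ss mulrA.
have z2 : s a = x2 * a * s a.
  by move: (congr1 (fun t => t * s a) e2); rewrite /= mul1r mulrDl hu2 addr0.
have h1 : a = a * a * y1.
  by move: (congr1 (fun t => a * t) e3); rewrite /= mulr1 mulrDr hv1 addr0 mulrA.
have h1y : a = y2 * a * a.
  by move: (congr1 (fun t => t * a) e4); rewrite /= mul1r mulrDl hv2 addr0.
have xxaa : x * x * a * a = x * a by rewrite xxa.
have f1 : x * a * y1 = x.
  by rewrite -xxaa -!mulrA [a * (a * y1)]mulrA -h1 mulrA xxa.
have ya : y2 * a = a * x by rewrite -{1}aax !mulrA -h1y.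
have f2 : x * a * y2 ^+ 2 * a = x.
  rewrite expr2 -!mulrA ya [y2 * (a * x)]mulrA ya.
  by rewrite [a * (a * x * x)]mulrA [a * (a * x)]mulrA aax mulrA xax.
rewrite !(@za_eq _ _ _ _ _ hs hd z1) !(@za_eq _ _ _ _ _ hs hd z2) f1 f2.
by split.
Qed.

Theorem proposition2p12 (R : pzRingType) (star : R -> R) (a : R) :
  involution star ->
  let c1 := dual_core_invertible star a in
  let c2 := dsum_whole (rprinc (star a)) (rann a) /\ dsum_whole (rprinc a) (rann a) in
  let c3 := sum_whole (rprinc (star a)) (rann a) /\ dsum_whole (rprinc a) (rann a) in
  let c4 := dsum_whole (lprinc a) (lann (star a)) /\ dsum_whole (rprinc a) (rann a) in
  let c5 := sum_whole (lprinc a) (lann (star a)) /\ dsum_whole (rprinc a) (rann a) in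
  let c6 := dsum_whole (rprinc (star a)) (rann a) /\ dsum_whole (lprinc a) (lann a) in
  let c7 := sum_whole (rprinc (star a)) (rann a) /\ dsum_whole (lprinc a) (lann a) in
  let c8 := dsum_whole (lprinc a) (lann (star a)) /\ dsum_whole (lprinc a) (lann a) in
  let c9 := sum_whole (lprinc a) (lann (star a)) /\ dsum_whole (lprinc a) (lann a) in
  (c1 <-> c2) /\ (c1 <-> c3) /\ (c1 <-> c4) /\ (c1 <-> c5) /\ (c1 <-> c6) /\
  (c1 <-> c7) /\ (c1 <-> c8) /\ (c1 <-> c9) /\
    (forall x, dual_core_inverse star a x ->
      forall x1 x2 y1 y2 u1 u2 v1 v2 : R,
        rann a u1 -> lann (star a) u2 -> rann a v1 -> lann a v2 ->
        1 = star a * x1 + u1 -> 1 = x2 * a + u2 ->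
        1 = a * y1 + v1 -> 1 = y2 * a + v2 ->
        [/\ x = star x1 * a * y1, x = star x1 * a * y2 ^+ 2 * a,
            x = x2 * a * y1 & x = x2 * a * y2 ^+ 2 * a]).
Proof.
move=> hs; cbv zeta.
have fwd : dual_core_invertible star a ->
  [/\ dsum_whole (rprinc (star a)) (rann a), dsum_whole (rprinc a) (rann a),
      dsum_whole (lprinc a) (lann (star a)) & dsum_whole (lprinc a) (lann a)].
  by case=> x hd; exact: (@from_dci _ _ _ _ hs hd).
have bwd : (exists z, star a = z * a * star a) ->
    (exists y, [/\ a = a * a * y, a = a * y * a & exists r, a * y = r * a]) ->
    dual_core_invertible star a.
  move=> [z e] [y [h1 h2 h3]]; exists (z * a * y); exact: key.
have Z1 := @ext_rs _ _ _ hs.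
have Z2 := @ext_la _ star a.
have Y1 := @ext_ra _ a.
have Y2 := @ext_laa _ a.
split; [|split; [|split; [|split; [|split; [|split; [|split; [|split]]]]]]].
- split; first by move/fwd=> [? ? ? ?].
  by case=> [[? ?] ?]; apply: bwd; [apply: Z1 | apply: Y1].
- split; first by move/fwd=> [[? ?] ? ? ?].
  by case=> [? ?]; apply: bwd; [apply: Z1 | apply: Y1].
- split; first by move/fwd=> [? ? ? ?].
  by case=> [[? ?] ?]; apply: bwd; [apply: Z2 | apply: Y1].
- split; first by move/fwd=> [? ? [? ?] ?].
  by case=> [? ?]; apply: bwd; [apply: Z2 | apply: Y1].
- split; first by move/fwd=> [? ? ? ?].
  by case=> [[? ?] ?]; apply: bwd; [apply: Z1 | apply: Y2].
- split; first by move/fwd=> [[? ?] ? ? ?].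
  by case=> [? ?]; apply: bwd; [apply: Z1 | apply: Y2].
- split; first by move/fwd=> [? ? ? ?].
  by case=> [[? ?] ?]; apply: bwd; [apply: Z2 | apply: Y2].
- split; first by move/fwd=> [? ? [? ?] ?].
  by case=> [? ?]; apply: bwd; [apply: Z2 | apply: Y2].
- exact: formula_part.
Qed.
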